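(* Let $\Psi$ be a marked $A_3$ simplicial complex satisfying CCCC. Then the closed stars of two distinct vertices of type $\hat b$ in $\Psi$ either are disjoint, or intersect in exactly one vertex, or intersect in exactly one (closed) edge.
   Context: Let $\Delta$ be the spherical triangle with vertices labelled $\hat a,\hat b,\hat c$, with angle $\pi/3$ at $\hat a$ and $\hat c$ and angle $\pi/2$ at $\hat b$. A marked $A_3$ simplicial complex is a homogeneous $2$-dimensional simplicial complex $\Psi$ in which each $2$-simplex $\sigma$ has an isomorphism $m_\sigma:\sigma\to\Delta$ such that $m_\sigma(x)=m_{\sigma'}(x)$ for all $x\in\sigma\cap\sigma'$; a vertex has type $\hat a,\hat b,\hat c$ according to the label of its image under any marking. $\Psi$ satisfies CCCC if: (1) the link of every vertex of type $\hat a$ or $\hat c$ has girth at least $6$; (2) the link of every vertex of type $\hat b$ is a complete bipartite graph containing an embedded $4$-cycle; (3) (i) every embedded closed edge path $w_1,u_1,w_2,u_2$ with $w_1,w_2$ of type $\hat a$ and $u_1,u_2$ of type $\hat c$ is filled by a vertex $v$ of type $\hat b$ such that $\{v,w_1,u_1\},\{v,u_1,w_2\},\{v,w_2,u_2\},\{v,u_2,w_1\}$ are $2$-simplices; (ii.a) every embedded closed edge path of length $6$ alternating between types $\hat a$ and $\hat b$ is filled by a vertex of type $\hat c$ forming a $2$-simplex with each of its six edges; (ii.b) the same with $\hat a$ and $\hat c$ interchanged. *)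

(* Defs.v *)
From Stdlib Require Import Arith.
Set Implicit Arguments.
Unset Strict Implicit.

(** Vertex types of the model triangle Delta. *)
Inductive vtype := ta | tb | tc.

Section Complex.
Variable V : Type.
Variable typ : V -> vtype.
Variable tri : V -> V -> V -> Prop.

(** A marked A_3 simplicial complex: homogeneous 2-dimensional simplicial
    complex whose 2-simplices carry compatible markings onto Delta, i.e. a
    typing of vertices in which every 2-simplex has one vertex of each type. *)
Definition marked_A3 : Prop :=
  (forall x y z, tri x y z -> tri y x z) /\
  (forall x y z, tri x y z -> tri x z y) /\
  (forall x y z, tri x y z -> typ x <> typ y /\ typ y <> typ z /\ typ x <> typ z) /\
  (* homogeneity: every vertex lies in a 2-simplex (edges are by definition
     pairs lying in a 2-simplex) *)
  (forall v, exists y z, tri v y z).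

Definition edge (x y : V) : Prop := exists z, tri x y z.

Definition embedded_cycle (adj : V -> V -> Prop) (n : nat) (f : nat -> V) : Prop :=
  (forall i j, i < n -> j < n -> f i = f j -> i = j) /\
  (forall i, i < n -> adj (f i) (f ((i + 1) mod n))).

(** The link of v: vertices u with edge v u, adjacent iff {v,u,w} is a 2-simplex. *)
Definition link_adj (v : V) (u w : V) : Prop := tri v u w.

Definition girth_ge6 (v : V) : Prop :=
  forall n f, 3 <= n -> n <= 5 -> ~ embedded_cycle (link_adj v) n f.

Definition link_complete_bipartite_with_4cycle (v : V) : Prop :=
  (exists P : V -> bool, forall u w, edge v u -> edge v w ->
      (link_adj v u w <-> P u <> P w)) /\
  (exists f, embedded_cycle (link_adj v) 4 f).

Definition alternating6 (f : nat -> V) (s t : vtype) : Prop :=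
  forall i, i < 6 -> typ (f i) = if Nat.even i then s else t.

(** Condition (3)(ii) for the pair of types s,t with filling type r. *)
Definition hex_filled (s t r : vtype) : Prop :=
  forall f, embedded_cycle edge 6 f -> (alternating6 f s t \/ alternating6 f t s) ->
    exists v, typ v = r /\ forall i, i < 6 -> tri v (f i) (f ((i + 1) mod 6)).

Definition CCCC : Prop :=
  (forall v, (typ v = ta \/ typ v = tc) -> girth_ge6 v) /\
  (forall v, typ v = tb -> link_complete_bipartite_with_4cycle v) /\
  (forall w1 u1 w2 u2, typ w1 = ta -> typ w2 = ta -> typ u1 = tc -> typ u2 = tc ->
     w1 <> w2 -> u1 <> u2 ->
     edge w1 u1 -> edge u1 w2 -> edge w2 u2 -> edge u2 w1 ->
     exists v, typ v = tb /\ tri v w1 u1 /\ tri v u1 w2 /\ tri v w2 u2 /\ tri v u2 w1) /\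
  hex_filled ta tb tc /\
  hex_filled tc tb ta.

(** Closed star of v: all faces of 2-simplices containing v. *)
Definition in_star_vertex (v x : V) : Prop := x = v \/ exists y, tri v x y.
Definition in_star_edge (v x y : V) : Prop := (x = v /\ edge v y) \/ (y = v /\ edge v x) \/ tri v x y.

End Complex.

(* Main.v *)
Require Import Defs.
From Stdlib Require Import Arith Lia Classical.

Ltac tps perm :=
  repeat match goal with H: ?tri ?a ?b ?c |- _ =>
    lazymatch goal with
    | _ : tri b a c |- _ => fail
    | _ => destruct (perm _ _ _ H) as [? [? [? [? ?]]]]
    end end.

Theorem lemma5p5 (V : Type) (typ : V -> vtype) (tri : V -> V -> V -> Prop) :
  marked_A3 typ tri -> CCCC typ tri ->
  forall v w : V, typ v = tb -> typ w = tb -> v <> w ->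
    (* disjoint *)
    (forall x, ~ (in_star_vertex tri v x /\ in_star_vertex tri w x)) \/
    (* exactly one vertex *)
    (exists x, forall z, (in_star_vertex tri v z /\ in_star_vertex tri w z) <-> z = x) \/
    (* exactly one closed edge *)
    (exists x y, x <> y /\ in_star_edge tri v x y /\ in_star_edge tri w x y /\
       forall z, (in_star_vertex tri v z /\ in_star_vertex tri w z) <-> (z = x \/ z = y)).
Proof.
  intros HM HC v w Hv Hw Hvw.
  destruct HM as [s12 [s23 [ty hom]]].
  destruct HC as [gir [bip [fill _]]].
  assert (perm: forall x y z, tri x y z -> tri y x z /\ tri x z y /\ tri y z x /\ tri z x y /\ tri z y x).
  { intros x y z H. repeat split; eauto. }
  assert (nbt: forall b x y, typ b = tb -> tri b x y ->
            (typ x = ta /\ typ y = tc) \/ (typ x = tc /\ typ y = ta)).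
  { intros b x y Hb H. destruct (ty _ _ _ H) as [T1 [T2 T3]].
    destruct (typ x), (typ y); try congruence; auto. }
  assert (nt: forall b x, typ b = tb -> (exists y, tri b x y) -> typ x = ta \/ typ x = tc).
  { intros b x Hb [y H]. destruct (nbt _ _ _ Hb H) as [[? ?]|[? ?]]; auto. }
  assert (oth: forall b t, typ b = tb -> (t = ta \/ t = tc) -> exists y z, tri b y z /\ typ y = t).
  { intros b t Hb Ht. destruct (hom b) as [p [q H]].
    destruct (nbt _ _ _ Hb H) as [[T1 T2]|[T1 T2]]; destruct Ht; subst t.
    - exists p, q; auto.
    - exists q, p; split; [apply perm; auto | auto].
    - exists q, p; split; [apply perm; auto | auto].
    - exists p, q; auto. }
  assert (Comp: forall b u u', typ b = tb -> (exists y, tri b u y) -> typ u = ta ->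
                 (exists y, tri b u' y) -> typ u' = tc -> tri b u u').
  { intros b u u' Hb Hu Tu Hu' Tu'.
    destruct (bip b Hb) as [[P HP] _].
    destruct (oth b ta Hb (or_introl eq_refl)) as [p [q [Hpq Tp]]].
    assert (Tq: typ q = tc).
    { destruct (nbt _ _ _ Hb Hpq) as [[? ?]|[? ?]]; congruence. }
    assert (Ep: edge tri b p) by (exists q; auto).
    assert (Eq: edge tri b q) by (exists p; apply perm; auto).
    assert (Eu: edge tri b u) by exact Hu.
    assert (Eu': edge tri b u') by exact Hu'.
    assert (Npq: P p <> P q) by (apply (HP p q Ep Eq); exact Hpq).
    assert (E1: P u = P p).
    { destruct (Bool.bool_dec (P u) (P p)) as [e|n]; auto.
      apply (HP u p Eu Ep) in n. unfold link_adj in n.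
      destruct (ty _ _ _ n) as [_ [T _]]. congruence. }
    assert (E2: P u' = P q).
    { destruct (Bool.bool_dec (P u') (P q)) as [e|n]; auto.
      apply (HP u' q Eu' Eq) in n. unfold link_adj in n.
      destruct (ty _ _ _ n) as [_ [T _]]. congruence. }
    apply (HP u u' Eu Eu'). congruence. }
  assert (four: forall q a b p1 p2, (typ q = ta \/ typ q = tc) -> a <> b -> p1 <> p2 ->
            typ a = tb -> typ b = tb -> typ p1 <> tb -> typ p2 <> tb ->
            tri q a p1 -> tri q p1 b -> tri q b p2 -> tri q p2 a -> False).
  { intros q a b p1 p2 Hq Hab Hp Ta Tb T1 T2 H1 H2 H3 H4.
    apply (gir q Hq 4 (fun i => match i with 0 => a | 1 => p1 | 2 => b | _ => p2 end)); try lia.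
    split.
    - intros i j Hi Hj E.
      destruct i as [|[|[|[|i]]]]; destruct j as [|[|[|[|j]]]]; simpl in E;
        try reflexivity; try lia; congruence.
    - intros i Hi. destruct i as [|[|[|[|i]]]]; simpl; unfold link_adj; auto; lia. }
  set (C := fun x => (exists y, tri v x y) /\ (exists y, tri w x y)).
  assert (samety: forall x1 x2, C x1 -> C x2 -> typ x1 = typ x2 -> x1 <> x2 -> False).
  { intros x1 x2 [V1 W1] [V2 W2] T12 N12.
    destruct (classic (exists y, C y /\ typ y <> typ x1)) as [[y [[Vy Wy] Ty]] | NE].
    - destruct (nt v x1 Hv V1) as [T1|T1].
      + assert (Ty': typ y = tc) by (destruct (nt v y Hv Vy); congruence).
        pose proof (Comp v x1 y Hv V1 T1 Vy Ty').
        pose proof (Comp v x2 y Hv V2 ltac:(congruence) Vy Ty').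
        pose proof (Comp w x1 y Hw W1 T1 Wy Ty').
        pose proof (Comp w x2 y Hw W2 ltac:(congruence) Wy Ty').
        apply (four y v w x1 x2); try congruence; auto; tps perm; assumption.
      + assert (Ty': typ y = ta) by (destruct (nt v y Hv Vy); congruence).
        pose proof (Comp v y x1 Hv Vy Ty' V1 T1).
        pose proof (Comp v y x2 Hv Vy Ty' V2 ltac:(congruence)).
        pose proof (Comp w y x1 Hw Wy Ty' W1 T1).
        pose proof (Comp w y x2 Hw Wy Ty' W2 ltac:(congruence)).
        apply (four y v w x1 x2); try congruence; auto; tps perm; assumption.
    - destruct (nt v x1 Hv V1) as [T1|T1].
      + destruct (oth v tc Hv (or_intror eq_refl)) as [y [yy [Hy Ty]]].
        destruct (oth w tc Hw (or_intror eq_refl)) as [y' [yy' [Hy' Ty']]].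
        assert (Vy: exists z, tri v y z) by eauto.
        assert (Wy': exists z, tri w y' z) by eauto.
        assert (Nyy: y <> y').
        { intro E; subst y'. apply NE. exists y. split. unfold C. split; eauto. congruence. }
        pose proof (Comp v x1 y Hv V1 T1 Vy Ty).
        pose proof (Comp v x2 y Hv V2 ltac:(congruence) Vy Ty).
        pose proof (Comp w x1 y' Hw W1 T1 Wy' Ty').
        pose proof (Comp w x2 y' Hw W2 ltac:(congruence) Wy' Ty').
        destruct (fill x1 y x2 y' T1 ltac:(congruence) Ty Ty' N12 Nyy) as [z [Tz [Z1 [Z2 [Z3 Z4]]]]].
        * exists v. tps perm; assumption.
        * exists v. tps perm; assumption.
        * exists w. tps perm; assumption.
        * exists w. tps perm; assumption.
        * assert (Nvz: v <> z).
          { intro E; subst z. apply NE. exists y'. split. unfold C. split; eauto.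
            congruence. }
          apply (four y v z x1 x2); try congruence; auto; tps perm; assumption.
      + destruct (oth v ta Hv (or_introl eq_refl)) as [y [yy [Hy Ty]]].
        destruct (oth w ta Hw (or_introl eq_refl)) as [y' [yy' [Hy' Ty']]].
        assert (Vy: exists z, tri v y z) by eauto.
        assert (Wy': exists z, tri w y' z) by eauto.
        assert (Nyy: y <> y').
        { intro E; subst y'. apply NE. exists y. split. unfold C. split; eauto. congruence. }
        pose proof (Comp v y x1 Hv Vy Ty V1 T1).
        pose proof (Comp v y x2 Hv Vy Ty V2 ltac:(congruence)).
        pose proof (Comp w y' x1 Hw Wy' Ty' W1 T1).
        pose proof (Comp w y' x2 Hw Wy' Ty' W2 ltac:(congruence)).
        destruct (fill y x1 y' x2 Ty Ty' T1 ltac:(congruence) Nyy N12) as [z [Tz [Z1 [Z2 [Z3 Z4]]]]].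
        * exists v. tps perm; assumption.
        * exists w. tps perm; assumption.
        * exists w. tps perm; assumption.
        * exists v. tps perm; assumption.
        * assert (Nvz: v <> z).
          { intro E; subst z. apply NE. exists y'. split. unfold C. split; eauto.
            congruence. }
          apply (four y v z x1 x2); try congruence; auto; tps perm; assumption. }
  assert (starC: forall u, in_star_vertex tri v u /\ in_star_vertex tri w u -> C u).
  { intros u [[E1|[y1 H1]] [E2|[y2 H2]]].
    - congruence.
    - subst u. destruct (ty _ _ _ H2) as [T _]. congruence.
    - subst u. destruct (ty _ _ _ H1) as [T _]. congruence.
    - split; eauto. }
  assert (Cstar: forall u, C u -> in_star_vertex tri v u /\ in_star_vertex tri w u).
  { intros u [[y1 H1] [y2 H2]]. split; right; eauto. }
  destruct (classic (exists x, C x)) as [[x Cx]|N].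
  - destruct (classic (exists z, C z /\ z <> x)) as [[z [Cz Nz]]|N2].
    + right; right.
      assert (Txz: typ x <> typ z) by (intro E; apply (samety x z); auto).
      pose proof Cx as [Vx Wx]. pose proof Cz as [Vz Wz].
      assert (Tv: tri v x z /\ tri w x z).
      { destruct (nt v x Hv Vx) as [T1|T1]; destruct (nt v z Hv Vz) as [T2|T2]; try congruence.
        - split; apply Comp; auto.
        - split; [pose proof (Comp v z x) | pose proof (Comp w z x)]; tps perm; auto. }
      exists x, z. split; [auto|]. split; [right; right; tauto|]. split; [right; right; tauto|].
      intro u. split.
      * intro H. apply starC in H.
        destruct (classic (u = x)) as [e|n1]; [auto|].
        destruct (classic (u = z)) as [e|n2]; [auto|].
        exfalso. pose proof H as [Vu _].
        destruct (nt v u Hv Vu) as [T3|T3]; destruct (nt v x Hv Vx) as [T1|T1];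
          destruct (nt v z Hv Vz) as [T2|T2]; try congruence.
        all: first [ apply (samety u x); auto; congruence | apply (samety u z); auto; congruence ].
      * intros [E|E]; subst u; apply Cstar; auto.
    + right; left. exists x. intro u. split.
      * intro H. apply starC in H.
        destruct (classic (u = x)) as [e|n1]; [auto|].
        exfalso. apply N2. eauto.
      * intro E; subst u; apply Cstar; auto.
  - left. intros x H. apply N. exists x. apply starC; auto.
Qed.
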